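(* Let $n \geq 2$, $N = \{1,\dots,n\}$, and $\epsilon \in (0,1)$. For each $i \in N$ let $\pi_i : 2^{N\setminus\{i\}} \to \mathbb{R}_{\geq 0}$ be a local score function, and let $\tilde\pi_i$ be the $(\epsilon/n)$-pruning of $\pi_i$ (with $V = N \setminus \{i\}$, $K = n-1$). For a DAG on $N$ with arc set $A$ let $\pi(A) = \prod_{i \in N} \pi_i(A_i)$ and $\tilde\pi(A) = \prod_{i\in N} \tilde\pi_i(A_i)$, where $A_i = \{j : ji \in A\}$. Let $Z = \sum_A \pi(A)$ and $\tilde Z = \sum_A \tilde\pi(A)$, the sums ranging over all arc sets $A$ of DAGs on $N$, and assume $Z > 0$. Then: (i) $\tilde Z \geq (1-\epsilon) Z$; (ii) the Kullback–Leibler divergence $\sum_{A:\,\tilde\pi(A)>0} \frac{\tilde\pi(A)}{\tilde Z}\ln\frac{\tilde\pi(A)/\tilde Z}{\pi(A)/Z}$ of the distribution $\tilde\pi/\tilde Z$ from $\pi/Z$ is at most $\epsilon/(1-\epsilon)$; (iii) the total variation distance $\tfrac12\sum_A \bigl|\pi(A)/Z - \tilde\pi(A)/\tilde Z\bigr|$ is at most $\epsilon$.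
   Context: For $g : 2^V \to \mathbb{R}_{\geq 0}$ on a finite set $V$ with $K = |V|$ elements and $\eta \geq 0$: for $j \in S \subseteq V$ let $\psi(j,S) = \sum_{R:\, j \in R \subseteq S} g(R)\,(1+1/K)^{|R|-K} K^{|R|-|S|}$. The $\eta$-pruning of $g$ is the function $\tilde g$ with $\tilde g(S) = 0$ if $S \neq \emptyset$ and $g(S) < \eta\,\psi(j,S)$ for every $j \in S$, and $\tilde g(S) = g(S)$ otherwise. *)

(* Defs.v *)
From HB Require Import structures.
From mathcomp Require Import all_boot all_order all_algebra fingraph.
From mathcomp Require Import reals exp.
Set Implicit Arguments. Unset Strict Implicit. Unset Printing Implicit Defensive.
Import Order.TTheory GRing.Theory Num.Theory.
Local Open Scope ring_scope.

Section Pruning.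
Variables (R : realType) (T : finType).

Definition prune_psi (V : {set T}) (g : {set T} -> R) (j : T) (S : {set T}) : R :=
  let K := #|V| in
  \sum_(Rs : {set T} | (j \in Rs) && (Rs \subset S))
     g Rs * (1 + K%:R^-1) ^ (#|Rs|%:Z - K%:Z) * K%:R ^ (#|Rs|%:Z - #|S|%:Z).

Definition prune (V : {set T}) (g : {set T} -> R) (eta : R) (S : {set T}) : R :=
  if (S != set0) && [forall j in S, g S < eta * prune_psi V g j S] then 0 else g S.
End Pruning.

Section DAGs.
Variables (R : realType) (n : nat).

Definition arc_rel (A : {set 'I_n * 'I_n}) : rel 'I_n := fun x y => (x, y) \in A.

(* A is the arc set of a DAG: no arc (i,j) is closed into a cycle by a path j ->* i
   (this also excludes self-loops) *)
Definition is_dag (A : {set 'I_n * 'I_n}) : bool :=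
  [forall p in A, ~~ connect (arc_rel A) p.2 p.1].

Definition parents (A : {set 'I_n * 'I_n}) (i : 'I_n) : {set 'I_n} :=
  [set j | (j, i) \in A].

Definition score (pi : 'I_n -> {set 'I_n} -> R) (A : {set 'I_n * 'I_n}) : R :=
  \prod_(i < n) pi i (parents A i).

Definition partition_fn (pi : 'I_n -> {set 'I_n} -> R) : R :=
  \sum_(A : {set 'I_n * 'I_n} | is_dag A) score pi A.

Definition pruned_scores (pi : 'I_n -> {set 'I_n} -> R) (eps : R) :
  'I_n -> {set 'I_n} -> R :=
  fun i => prune [set~ i] (pi i) (eps / n%:R).
End DAGs.

(* Main.v *)
Require Import Defs.
From HB Require Import structures.
From mathcomp Require Import all_boot all_order all_algebra fingraph.
From mathcomp Require Import reals exp.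
From mathcomp Require Import ring lra.
Import Order.TTheory GRing.Theory Num.Theory.
Local Open Scope ring_scope.
Set Implicit Arguments. Unset Strict Implicit. Unset Printing Implicit Defensive.
Lemma sum_sub_pow (F : comNzRingType) (T : finType) (x : F) k :
  forall (U Rs : {set T}), #|U| = k -> [disjoint Rs & U] ->
  \sum_(S : {set T} | (Rs \subset S) && (S \subset Rs :|: U)) x ^+ (#|S| - #|Rs|)
    = (1 + x) ^+ k.
Proof.
elim: k => [|k IH] U Rs hU hd.
  move/eqP: hU; rewrite cards_eq0 => /eqP ->; rewrite setU0.
  rewrite (big_pred1 Rs) ?subnn ?expr0 // => S /=.
  by rewrite eqEsubset andbC.
have : U != set0 by rewrite -card_gt0 hU.
case/set0Pn => a aU.
have aR : a \notin Rs by rewrite (disjointFl hd aU).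
set U' := U :\ a.
have hU' : #|U'| = k by move: hU; rewrite (cardsD1 a U) aU add1n => -[].
have hd' : [disjoint Rs & U'].
  by apply: disjointWr hd; exact: subsetDl.
have hd'' : [disjoint a |: Rs & U'].
  rewrite disjoints_subset; apply/subsetP => y; rewrite /U' !inE => /predU1P[->|yR]; first by rewrite eqxx.
  by rewrite (disjointFr hd yR) andbF.
have RsD : Rs :\ a = Rs.
  by apply/setP => y; rewrite !inE; case: eqP => // ->; rewrite (negbTE aR).
rewrite (bigID (fun S : {set T} => a \in S)) /=.
rewrite (eq_big (fun S : {set T} => (a |: Rs \subset S) && (S \subset (a |: Rs) :|: U'))
                (fun S : {set T} => x * x ^+ (#|S| - #|a |: Rs|))); first last.
- move=> S /andP[/andP[RS _] aS].
  rewrite -exprS cardsU1 aR add1n; congr (_ ^+ _).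
  have : (#|a |: Rs| <= #|S|)%N.
    by apply: subset_leq_card; rewrite subUset sub1set aS RS.
  rewrite cardsU1 aR add1n => h; rewrite subnSK //.
- move=> S; rewrite subUset sub1set -setUA setUCA /U' setD1K // andbC andbA.
  by rewrite [(a \in S) && _]andbC.
rewrite -big_distrr /= IH //.
rewrite (eq_bigl (fun S : {set T} => (Rs \subset S) && (S \subset Rs :|: U'))); last first.
  move=> S; rewrite /U' -RsD -setDUl subsetD1 RsD andbA //.
rewrite IH // exprS; ring.
Qed.
Lemma powz_neg (F : unitRingType) (y : F) (a b : nat) : (a <= b)%N ->
  y ^ (a%:Z - b%:Z) = (y ^+ (b - a))^-1.
Proof.
move=> ab; rewrite -opprB subzn // -invr_expz exprnP //.
Qed.

Lemma weight_sum (F : realType) (T : finType) (V Rs : {set T}) :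
  Rs \subset V -> (0 < #|V|)%N ->
  \sum_(S : {set T} | (Rs \subset S) && (S \subset V))
     (1 + (#|V|%:R : F)^-1) ^ (#|Rs|%:Z - #|V|%:Z) * #|V|%:R ^ (#|Rs|%:Z - #|S|%:Z) = 1.
Proof.
move=> RV V0.
set x : F := (#|V|%:R)^-1.
have RVc : (#|Rs| <= #|V|)%N by exact: subset_leq_card.
rewrite (eq_bigr (fun S : {set T} => ((1 + x) ^+ (#|V| - #|Rs|))^-1 * x ^+ (#|S| - #|Rs|))); last first.
  move=> S /andP[RS _]; rewrite powz_neg // powz_neg ?subset_leq_card //.
  by rewrite /x exprVn.
rewrite -big_distrr /=.
have E : Rs :|: (V :\: Rs) = V.
  apply/setP => y; rewrite !inE; case: (boolP (y \in Rs)) => //= yR.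
  by rewrite (subsetP RV).
rewrite (eq_bigl (fun S : {set T} => (Rs \subset S) && (S \subset Rs :|: (V :\: Rs)))); last by move=> S; rewrite E.
rewrite (@sum_sub_pow _ _ x _ (V :\: Rs) Rs erefl); last first.
  by rewrite disjoints_subset; apply/subsetP => y; rewrite !inE => ->.
rewrite cardsDS // mulVf // expf_neq0 //.
have : 0 < 1 + x by rewrite /x ltr_wpDr // invr_ge0 ler0n.
by rewrite lt0r => /andP[].
Qed.
Lemma sum_le_sub (F : realType) (I : finType) (P Q : pred I) (f : I -> F) :
  (forall i, P i -> Q i) -> (forall i, Q i -> 0 <= f i) ->
  \sum_(i | P i) f i <= \sum_(i | Q i) f i.
Proof.
move=> PQ fQ.
have -> : \sum_(i | P i) f i = \sum_(i | Q i && P i) f i.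
  by apply: eq_bigl => i; case: (boolP (P i)) => Pi; rewrite ?andbT ?andbF ?(PQ _ Pi).
rewrite [X in _ <= X](bigID P) /= lerDl sumr_ge0 // => i /andP[Qi _]; exact: fQ.
Qed.

Definition upd n (A : {set 'I_n * 'I_n}) (i : 'I_n) (S : {set 'I_n}) : {set 'I_n * 'I_n} :=
  [set p | if p.2 == i then p.1 \in S else p \in A].

Lemma parents_upd n (A : {set 'I_n * 'I_n}) (i : 'I_n) (S : {set 'I_n}) (k : 'I_n) :
  parents (upd A i S) k = if k == i then S else parents A k.
Proof.
by apply/setP => j; rewrite !inE /=; case: (k == i) => //; rewrite inE.
Qed.

Lemma upd_sub n (A : {set 'I_n * 'I_n}) (i : 'I_n) (S : {set 'I_n}) : S \subset parents A i -> upd A i S \subset A.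
Proof.
move=> /subsetP SP; apply/subsetP => -[a b]; rewrite inE /=.
case: eqP => // ->; move/SP; by rewrite inE.
Qed.

Lemma upd_upd n (A : {set 'I_n * 'I_n}) (i : 'I_n) (S : {set 'I_n}) : upd (upd A i S) i (parents A i) = A.
Proof.
apply/setP => -[a b]; rewrite !inE /=; by case: eqP => // ->.
Qed.

Lemma dag_sub n (A B : {set 'I_n * 'I_n}) : B \subset A -> is_dag A -> is_dag B.
Proof.
move=> /subsetP BA /forall_inP dA; apply/forall_inP => p pB.
apply: contra (dA p (BA p pB)); apply: connect_sub => x y xy.
by apply: connect1; rewrite /arc_rel BA.
Qed.

Lemma dag_parents n (A : {set 'I_n * 'I_n}) (i : 'I_n) : is_dag A -> parents A i \subset [set~ i].
Proof.
move=> /forall_inP dA; apply/subsetP => j; rewrite !inE => jA.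
apply/eqP => ji; move: (dA _ jA) => /=; by rewrite ji connect0.
Qed.

Lemma score_split n (F : realType) (f : 'I_n -> {set 'I_n} -> F) (A : {set 'I_n * 'I_n}) (i : 'I_n) :
  score f A = f i (parents A i) * \prod_(k | k != i) f k (parents A k).
Proof. by rewrite /score (bigD1 i). Qed.

Lemma score_ge0 n (F : realType) (f : 'I_n -> {set 'I_n} -> F) (A : {set 'I_n * 'I_n}) :
  (forall (i : 'I_n) (S : {set 'I_n}), S \subset [set~ i] -> 0 <= f i S) -> is_dag A -> 0 <= score f A.
Proof.
move=> f0 dA; rewrite /score prodr_ge0 // => k _; apply: f0; exact: dag_parents.
Qed.
Definition wt (F : realType) (T : finType) (K : nat) (Rs S : {set T}) : F :=
  (1 + (K%:R : F)^-1) ^ (#|Rs|%:Z - K%:Z) * (K%:R : F) ^ (#|Rs|%:Z - #|S|%:Z).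

Lemma wt_ge0 (F : realType) (T : finType) (K : nat) (Rs S : {set T}) : 0 <= wt F K Rs S.
Proof.
rewrite /wt mulr_ge0 //; first (apply/ltW/exprz_gt0; rewrite ltr_wpDr ?invr_ge0 ?ler0n //).
case: K => [|K]; first by rewrite exprz_ge0.
by apply/ltW/exprz_gt0; rewrite ltr0n.
Qed.

Definition pruned_at (F : realType) n (pi : 'I_n -> {set 'I_n} -> F) (eps : F)
  (A : {set 'I_n * 'I_n}) (i : 'I_n) : bool :=
  (parents A i != set0) &&
  [forall j in parents A i, pi i (parents A i) <
     eps / n%:R * prune_psi [set~ i] (pi i) j (parents A i)].

Lemma pruned_eq (F : realType) n (pi : 'I_n -> {set 'I_n} -> F) (eps : F)
  (A : {set 'I_n * 'I_n}) (i : 'I_n) :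
  pruned_scores pi eps i (parents A i) = if pruned_at pi eps A i then 0 else pi i (parents A i).
Proof. by []. Qed.
Lemma per_node (F : realType) n (pi : 'I_n -> {set 'I_n} -> F) (eps : F) (i : 'I_n) :
  (2 <= n)%N -> 0 <= eps ->
  (forall (i : 'I_n) (S : {set 'I_n}), S \subset [set~ i] -> 0 <= pi i S) ->
  \sum_(A : {set 'I_n * 'I_n} | is_dag A && pruned_at pi eps A i) score pi A
    <= eps / n%:R * partition_fn pi.
Proof.
move=> n2 eps0 pi0.
set eta := eps / n%:R.
have eta0 : 0 <= eta by rewrite /eta divr_ge0 ?ler0n.
set V := [set~ i].
have K0 : (0 < #|V|)%N by rewrite cardsC1 card_ord -subn1 subn_gt0.
set G := fun q : {set 'I_n * 'I_n} * {set 'I_n} =>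
  wt F #|V| (parents q.1 i) q.2 * score pi q.1.
set h := fun p : {set 'I_n * 'I_n} * {set 'I_n} => (upd p.1 i p.2, parents p.1 i).
apply: (@le_trans _ _ (\sum_(A : {set 'I_n * 'I_n} | is_dag A)
   eta * \sum_(Rr : {set 'I_n} | Rr \subset parents A i) G (h (A, Rr)))).
  apply: (@le_trans _ _ (\sum_(A : {set 'I_n * 'I_n} | is_dag A && pruned_at pi eps A i)
   eta * \sum_(Rr : {set 'I_n} | Rr \subset parents A i) G (h (A, Rr)))).
    apply: ler_sum => A /andP[dA].
    case/andP => /set0Pn [j jS] /forall_inP /(_ j jS) lt.
    rewrite (score_split _ _ i).
    set S := parents A i.
    set rest := \prod_(k | k != i) pi k (parents A k).
    have rest0 : 0 <= rest.
      by rewrite prodr_ge0 // => k _; apply: pi0; apply: dag_parents.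
    apply: (@le_trans _ _ (eta * prune_psi V (pi i) j S * rest)).
      by rewrite ler_wpM2r // ltW.
    have -> : eta * \sum_(Rr : {set 'I_n} | Rr \subset S) G (h (A, Rr)) =
       eta * (\sum_(Rr : {set 'I_n} | Rr \subset S) pi i Rr * wt F #|V| Rr S) * rest.
      rewrite -mulrA; congr (_ * _); rewrite big_distrl /=; apply: eq_bigr => Rr RrS.
      rewrite /G /h /= (score_split _ _ i) parents_upd eqxx.
      have -> : \prod_(k | k != i) pi k (parents (upd A i Rr) k) = rest.
        by apply: eq_bigr => k /negbTE ki; rewrite parents_upd ki.
      by rewrite mulrCA mulrA.
    rewrite ler_wpM2r // ler_wpM2l // /prune_psi /=.
    rewrite (eq_bigr (fun Rs : {set 'I_n} => pi i Rs * wt F #|V| Rs S)); last by move=> Rs _; rewrite /wt mulrA.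
    apply: sum_le_sub => [Rr /andP[] //|Rr RrS].
    rewrite mulr_ge0 //; last exact: wt_ge0.
    apply: pi0; apply: subset_trans RrS _; exact: dag_parents.
  apply: sum_le_sub => [A /andP[] //|A dA].
  rewrite mulr_ge0 // sumr_ge0 // => Rr RrS.
  rewrite /G mulr_ge0 ?wt_ge0 //.
  apply: (score_ge0 pi0); apply: (dag_sub _ dA); exact: upd_sub.
rewrite -big_distrr /= ler_wpM2l //.
rewrite pair_big_dep /=.
set Pset := [set p : {set 'I_n * 'I_n} * {set 'I_n} | is_dag p.1 && (p.2 \subset parents p.1 i)].
rewrite (eq_bigl (fun p => p \in Pset)); last by move=> p; rewrite inE.
rewrite (eq_bigr (fun p => G (h p))); last by move=> [a b].
rewrite -(big_imset G) /=; last first.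
  move=> [A1 R1] [A2 R2]; rewrite !inE /= => /andP[d1 s1] /andP[d2 s2] [e1 e2].
  have eA : A1 = A2 by rewrite -(upd_upd A1 i R1) -(upd_upd A2 i R2) e1 e2.
  have eR : R1 = R2.
    by move: (congr1 (fun B => parents B i) e1); rewrite /= !parents_upd eqxx.
  by rewrite eA eR.
have E : \sum_(q : {set 'I_n * 'I_n} * {set 'I_n} | is_dag q.1 && ((parents q.1 i \subset q.2) && (q.2 \subset V))) G q
    = partition_fn pi.
  transitivity (\sum_(B : {set 'I_n * 'I_n} | is_dag B) \sum_(S : {set 'I_n} | (parents B i \subset S) && (S \subset V)) G (B, S)).
    by rewrite pair_big_dep; apply: eq_bigr => -[].
  apply: eq_bigr => B dB; rewrite /G /= -big_distrl /= /wt weight_sum ?mul1r //.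
  exact: dag_parents.
rewrite -E; apply: sum_le_sub.
  move=> q /imsetP[[A Rr]]; rewrite inE /= => /andP[dA RA] -> /=.
  rewrite parents_upd eqxx RA dag_parents // !andbT.
  apply: (dag_sub _ dA); exact: upd_sub.
move=> q /andP[dq _]; rewrite /G mulr_ge0 ?wt_ge0 //; exact: score_ge0.
Qed.
Theorem theorem2 (R : realType) (n : nat) (eps : R)
  (pi : 'I_n -> {set 'I_n} -> R) :
  (2 <= n)%N -> 0 < eps < 1 ->
  (forall (i : 'I_n) (S : {set 'I_n}), S \subset [set~ i] -> 0 <= pi i S) ->
  0 < partition_fn pi ->
  let tpi := pruned_scores pi eps in
  let Z := partition_fn pi in
  let tZ := partition_fn tpi in
  [/\ tZ >= (1 - eps) * Z,
      \sum_(A : {set 'I_n * 'I_n} | is_dag A && (0 < score tpi A))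
         (score tpi A / tZ) * ln ((score tpi A / tZ) / (score pi A / Z))
        <= eps / (1 - eps)
    & 2^-1 * \sum_(A : {set 'I_n * 'I_n} | is_dag A)
         `|score pi A / Z - score tpi A / tZ| <= eps].
Proof.
move=> n2 /andP[eps0 eps1] pi0 Z0 tpi Z tZ.
pose bad (A : {set 'I_n * 'I_n}) := [exists i, pruned_at pi eps A i].
have stpi : forall A, score tpi A = if bad A then 0 else score pi A.
  move=> A; rewrite /score; case: (boolP (bad A)).
    by case/existsP => i Pi; rewrite (bigD1 i) //= /tpi pruned_eq Pi mul0r.
  rewrite negb_exists => /forallP nb; apply: eq_bigr => k _.
  by rewrite /tpi pruned_eq (negbTE (nb k)).
have tZE : tZ = \sum_(A : {set 'I_n * 'I_n} | is_dag A && ~~ bad A) score pi A.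
  rewrite /tZ /partition_fn (bigID bad) /= big1 ?add0r.
    by apply: eq_bigr => A /andP[_ /negbTE b]; rewrite stpi b.
  by move=> A /andP[_ b]; rewrite stpi b.
set G := \sum_(A : {set 'I_n * 'I_n} | is_dag A && ~~ bad A) score pi A in tZE.
set B := \sum_(A : {set 'I_n * 'I_n} | is_dag A && bad A) score pi A.
have ZE : Z = G + B by rewrite /Z /partition_fn (bigID bad) /= addrC.
have B0 : 0 <= B by rewrite sumr_ge0 // => A /andP[dA _]; exact: score_ge0.
have Ble : B <= eps * Z.
  apply: (@le_trans _ _ (\sum_(i < n) \sum_(A : {set 'I_n * 'I_n} | is_dag A && pruned_at pi eps A i) score pi A)).
    rewrite (exchange_big_dep (fun A => is_dag A)) /=; last by move=> i A _ /andP[].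
    apply: (@le_trans _ _ (\sum_(A : {set 'I_n * 'I_n} | is_dag A && bad A)
        \sum_(i < n | is_dag A && pruned_at pi eps A i) score pi A)).
      apply: ler_sum => A /andP[dA /existsP[i0 P0]].
      apply: (@le_trans _ _ (\sum_(i < n | i == i0) score pi A)); first by rewrite big_pred1_eq.
      apply: sum_le_sub => [i /eqP -> |i _]; first by rewrite dA P0.
      exact: score_ge0.
    apply: sum_le_sub => [A /andP[] //|A dA].
    by rewrite sumr_ge0 // => i _; apply: score_ge0.
  apply: (@le_trans _ _ (\sum_(i < n) (eps / n%:R * Z))).
    by apply: ler_sum => i _; apply: per_node => //; exact: ltW.
  rewrite sumr_const card_ord.
  have n0 : (n%:R : R) != 0 by rewrite pnatr_eq0 -lt0n (leq_trans _ n2).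
  suff -> : eps / n%:R * Z *+ n = eps * Z by [].
  by rewrite -[in LHS]mulr_natr; field.
have tZge : (1 - eps) * Z <= tZ by rewrite tZE; lra.
have tZ0 : 0 < tZ by apply: lt_le_trans tZge; rewrite mulr_gt0 // subr_gt0.
have tZZ : tZ <= Z by rewrite tZE ZE lerDl.
split => //.
- have Zp : 0 < Z by [].
  have sge0 : forall A, is_dag A -> 0 <= score tpi A.
    by move=> A dA; rewrite stpi; case: (bad A) => //; exact: score_ge0.
  rewrite (eq_bigr (fun A => score tpi A / tZ * ln (Z / tZ))); last first.
    move=> A /andP[dA sp]; congr (_ * ln _).
    have nb : ~~ bad A by move: sp; rewrite stpi; case: (bad A); rewrite ?ltxx.
    rewrite stpi (negbTE nb) in sp *.
    have p0 : score pi A != 0 by rewrite gt_eqF.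
    have z0 : Z != 0 by rewrite gt_eqF.
    have t0 : tZ != 0 by rewrite gt_eqF.
    by field; rewrite p0 z0 t0.
  rewrite -big_distrl -big_distrl /=.
  have -> : \sum_(A : {set 'I_n * 'I_n} | is_dag A && (0 < score tpi A)) score tpi A = tZ.
    rewrite /tZ /partition_fn [RHS](bigID (fun A => 0 < score tpi A)) /=.
    rewrite [X in _ + X]big1 ?addr0 // => A /andP[dA nz].
    by move: (sge0 A dA); rewrite le_eqVlt (negbTE nz) orbF => /eqP <-.
  rewrite mulfV ?gt_eqF // mul1r.
  have e1 : 0 < 1 - eps by rewrite subr_gt0.
  have e0 : 1 - eps != 0 by rewrite gt_eqF.
  have z0 : Z != 0 by rewrite gt_eqF.
  have q0 : 0 <= eps / (1 - eps) by rewrite divr_ge0 // ltW.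
  apply: le_trans (le_ln1Dx _); last by apply: lt_le_trans q0; rewrite ltrN10.
  rewrite ler_ln ?posrE ?divr_gt0 //; last by rewrite (lt_le_trans ltr01) // lerDl.
  rewrite ler_pdivrMr //.
  have -> : 1 + eps / (1 - eps) = (1 - eps)^-1 by field; rewrite ?e0.
  have -> : Z = (1 - eps)^-1 * ((1 - eps) * Z) by field; rewrite ?e0.
  by rewrite ler_wpM2l // invr_ge0 ltW.
- have Zp : 0 < Z by [].
  rewrite (bigID bad) /=.
  rewrite [X in _ * (X + _)](eq_bigr (fun A => score pi A * Z^-1)); last first.
    move=> A /andP[dA bA]; rewrite stpi bA mul0r subr0 ger0_norm //.
    by rewrite divr_ge0 ?score_ge0 // ltW.
  rewrite [X in _ * (_ + X)](eq_bigr (fun A => score pi A * (tZ^-1 - Z^-1))); last first.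
    move=> A /andP[dA bA]; rewrite stpi (negbTE bA) ler0_norm; last first.
      rewrite subr_le0 ler_wpM2l ?score_ge0 // lef_pV2 ?posrE //.
    by rewrite opprB mulrBr.
  rewrite -!big_distrl /= -/G -/B -tZE.
  have -> : B = Z - tZ by rewrite ZE tZE; lra.
  have z0 : Z != 0 by rewrite gt_eqF.
  have t0 : tZ != 0 by rewrite gt_eqF.
  have -> : 2^-1 * ((Z - tZ) / Z + tZ * (tZ^-1 - Z^-1)) = 1 - tZ / Z.
    by field; rewrite z0 t0.
  rewrite lerBlDr -lerBlDl ler_pdivlMr //.
Qed.
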